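(* Suppose $\mathscr X\in\mathbb R^{I_1\times\cdots\times I_N}$ and $\pi_n$ is a permutation of $\{1,\dots,I_n\}$ for each $1\leq n\leq N$. Let $r$ be a tensor rank function. Then the tensor $\mathscr Y\in\mathbb R^{I_1\times\cdots\times I_N}$ given by $y_{i_1\cdots i_N}=x_{\pi_1(i_1)\cdots\pi_N(i_N)}$ satisfies $r(\mathscr Y)=r(\mathscr X)$.
   Context: $\mathcal T$ is the collection of all real tensors. A rank-one tensor is one of the form $x_{i_1\cdots i_N}=a^{(1)}_{i_1}\cdots a^{(N)}_{i_N}$ with all $\mathbf a^{(n)}$ nonzero vectors. $\mathscr I_{M,N}$ is the order-$N$ tensor of size $M\times\cdots\times M$ with $1$ in positions $(i,\dots,i)$ and $0$ elsewhere. The mode-$n$ product of $\mathscr X\in\mathbb R^{I_1\times\cdots\times I_N}$ with $\mathbf A\in\mathbb R^{J\times I_n}$ is $\mathscr X\times_n\mathbf A$ with entries $\sum_{i_n=1}^{I_n}x_{i_1\cdots i_N}a_{j i_n}$ at position $(i_1,\dots,i_{n-1},j,i_{n+1},\dots,i_N)$. A tensor rank function is a function $r:\mathcal T\to\mathbb N\cup\{0\}$ such that: (TR1) $r(\mathscr X)=1$ iff $\mathscr X$ is rank-one; (TR2) $r(\mathscr I_{M,N})=M$ whenever $N\ge2$; (TR3) for a matrix $\mathscr X\in\mathbb R^{I_1\times I_2}$, $r(\mathscr X)$ is its matrix rank; (TR4) if $\mathscr X\in\mathbb R^{I_1\times\cdots\times I_N}$ and $\mathscr X'$ is the corresponding tensor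 in $\mathbb R^{I_1\times\cdots\times I_N\times1}$, then $r(\mathscr X)=r(\mathscr X')$; (TR5) for $\pi\in S_N$, the tensor $\mathscr Y$ with $y_{i_1\cdots i_N}=x_{i_{\pi(1)}\cdots i_{\pi(N)}}$ satisfies $r(\mathscr Y)=r(\mathscr X)$; (TR6) $r(\mathscr X\times_n\mathbf A)\le r(\mathscr X)$ for all $\mathscr X\in\mathbb R^{I_1\times\cdots\times I_N}$, $n$, and $\mathbf A\in\mathbb R^{J\times I_n}$. *)

(* Defs.v *)
From HB Require Import structures.
From mathcomp Require Import all_boot all_order all_algebra all_fingroup.
From Stdlib Require Reals.
From mathcomp Require Import Rstruct.
Notation R := Rdefinitions.R.
Set Implicit Arguments. Unset Strict Implicit. Unset Printing Implicit Defensive.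
Import GRing.Theory Num.Theory.
Local Open Scope ring_scope.

(* Real tensors of arbitrary order N = size s and sizes I_1..I_N = s. *)
Definition idx (s : seq nat) : finType :=
  {dffun forall k : 'I_(size s), 'I_(nth 0%N s k)}.

Record tensor := Tensor { tdims : seq nat; tent : {ffun idx tdims -> R} }.

(* nat value of the k-th coordinate of a multi-index (0 if out of range) *)
Definition ival (s : seq nat) (i : idx s) (k : nat) : nat :=
  if (insub k : option 'I_(size s)) is Some k' then val (i k') else 0%N.

(* A nonzero scalar factor c is allowed; for N >= 1 it can be absorbed into
   a^(1), so this is exactly the paper's notion; for order-0 tensors (scalars)
   it makes exactly the nonzero scalars rank-one. *)
Definition rank_one (X : tensor) : Prop :=
  exists (c : R) (a : forall k : 'I_(size (tdims X)), 'I_(nth 0%N (tdims X) k) -> R),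
    c <> 0 /\ (forall k, exists t, a k t <> 0) /\
    forall i : idx (tdims X), tent X i = c * \prod_(k < size (tdims X)) a k (i k).

Definition diag_tensor (M N : nat) : tensor :=
  @Tensor (nseq N M) [ffun i : idx (nseq N M) =>
    if [forall k, forall l, val (i k) == val (i l)] then 1 else 0].

Definition mat_tensor (I1 I2 : nat) (A : 'M[R]_(I1, I2)) : tensor :=
  @Tensor [:: I1; I2] [ffun i : idx [:: I1; I2] =>
    A (i (@Ordinal 2 0 isT)) (i (@Ordinal 2 1 isT))].

Definition is_tensor_rank_fn (r : tensor -> nat) : Prop :=
  (forall X, r X = 1%N <-> rank_one X) /\
  (forall M N, (2 <= N)%N -> r (diag_tensor M N) = M) /\
  (forall I1 I2 (A : 'M[R]_(I1, I2)), r (mat_tensor A) = \rank A) /\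
  (* TR4 : X' is X viewed in R^{I_1 x..x I_N x 1} *)
  (forall X X', tdims X' = rcons (tdims X) 1%N ->
     (forall (i' : idx (tdims X')) (j : idx (tdims X)),
        (forall k, (k < size (tdims X))%N -> ival i' k = ival j k) ->
        tent X' i' = tent X j) ->
     r X = r X') /\
  (forall N (p : 'S_N) X Y,
     size (tdims X) = N -> size (tdims Y) = N ->
     (forall n : 'I_N, nth 0%N (tdims X) n = nth 0%N (tdims Y) (p n)) ->
     (forall (i : idx (tdims Y)) (j : idx (tdims X)),
        (forall n : 'I_N, ival j n = ival i (p n)) -> tent Y i = tent X j) ->
     r Y = r X) /\
  (* TR6 : Z = X x_n A *)
  (forall X (n : 'I_(size (tdims X))) J (A : 'M[R]_(J, nth 0%N (tdims X) n)) Z,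
     tdims Z = set_nth 0%N (tdims X) n J ->
     (forall i : idx (tdims Z),
        tent Z i = \sum_(j : idx (tdims X) |
                        [forall k : 'I_(size (tdims X)), (k != n) ==> (val (j k) == ival i k)])
                     \sum_(a : 'I_J | val a == ival i n) A a (j n) * tent X j) ->
     (r Z <= r X)%N).

Definition mode_perm (X : tensor)
  (p : forall n : 'I_(size (tdims X)), {perm 'I_(nth 0%N (tdims X) n)}) : tensor :=
  @Tensor (tdims X) [ffun i : idx (tdims X) =>
     tent X (finfun (fun n => p n (i n)) : idx (tdims X))].

(* Main.v *)
Require Import Defs.
From HB Require Import structures.
From mathcomp Require Import all_boot all_order all_algebra all_fingroup.
From Stdlib Require Reals.
From mathcomp Require Import Rstruct.
Set Implicit Arguments. Unset Strict Implicit. Unset Printing Implicit Defensive.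
Import GRing.Theory Num.Theory.
Local Open Scope ring_scope.
Set Warnings "-all".

Lemma set_nth_nth_id (s : seq nat) n : (n < size s)%N -> set_nth 0%N s n (nth 0%N s n) = s.
Proof.
move=> hn; apply: (@eq_from_nth _ 0%N).
  by rewrite size_set_nth; apply/maxn_idPr.
move=> i _; rewrite nth_set_nth /=; case: eqP => // ->; done.
Qed.

Lemma ival_ord (s : seq nat) (i : idx s) (k : 'I_(size s)) : ival i k = val (i k).
Proof. by rewrite /ival valK. Qed.

Definition Pm (X : tensor)
  (p : forall n : 'I_(size (tdims X)), {perm 'I_(nth 0%N (tdims X) n)}) (m : nat) :=
  mode_perm (fun k => if (val k < m)%N then p k else 1%g).

Lemma tdims_Pm X p m : tdims (@Pm X p m) = tdims X.
Proof. by []. Qed.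

Lemma step (r : tensor -> nat) (Hr : is_tensor_rank_fn r) X p m :
  (m < size (tdims X))%N -> (r (@Pm X p m.+1) <= r (@Pm X p m))%N.
Proof.
move=> hm.
have [_ [_ [_ [_ [_ H6]]]]] := Hr.
set n : 'I_(size (tdims X)) := Ordinal hm.
pose A : 'M[R]_(nth 0%N (tdims X) n, nth 0%N (tdims X) n) :=
  \matrix_(a, b) (b == p n a)%:R.
apply: (H6 (Pm p m) n _ A).
  by rewrite /= set_nth_nth_id.
move=> i.
pose j0 : idx (tdims X) := finfun (fun k => (if val k == m then p k else 1%g) (i k)).
rewrite (bigD1 j0) /=; last first.
  apply/forallP => k; apply/implyP => hk.
  rewrite /j0 ffunE ival_ord.
  have hkm : (val k == m) = false.
    by apply/negbTE; apply: contra hk => /eqP e; apply/eqP/val_inj.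
  by rewrite hkm perm1.
have inner : forall j : idx (tdims X),
   \sum_(a < nth 0%N (tdims X) m | val a == ival i m) A a (j n) * tent (Pm p m) j
   = A (i n) (j n) * tent (Pm p m) j.
  move=> j; rewrite (big_pred1 (i n)) // => a /=.
  have -> : ival i m = val (i n) := ival_ord i n.
  by rewrite val_eqE.
rewrite inner big1 ?addr0; last first.
  move=> j /andP [hj hne]; rewrite inner /A mxE.
  suff -> : (j n == p n (i n)) = false by rewrite mul0r.
  apply/negbTE; apply: contra hne => /eqP hjn.
  apply/eqP/ffunP => k; rewrite /j0 ffunE.
  case: (eqVneq k n) => [-> | hk].
    by rewrite /= eqxx hjn.
  have hkm : (val k == m) = false.
    by apply/negbTE; apply: contra hk => /eqP e; apply/eqP/val_inj.
  rewrite hkm perm1; apply/val_inj; move/forallP: hj => /(_ k); rewrite hk /=.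
  by rewrite ival_ord => /eqP.
rewrite /A mxE /j0 !ffunE /= !eqxx mul1r.

congr (tent X _); apply/ffunP => k; rewrite !ffunE.
case: (eqVneq (val k) m) => [e | hk].
  have -> : k = n by apply: val_inj.
  by rewrite /= ltnSn ltnn perm1.
by rewrite ltnS leq_eqVlt (negbTE hk) /= perm1.
Qed.

Lemma le_all (r : tensor -> nat) (Hr : is_tensor_rank_fn r) X p m :
  (m <= size (tdims X))%N -> (r (@Pm X p m) <= r X)%N.
Proof.
elim: m => [|m IH] hm.
  suff -> : Pm p 0 = X by [].
  clear; case: X p => s t p; rewrite /Pm /mode_perm /=; congr Tensor.
  apply/ffunP => i; rewrite ffunE; congr (t _).
  by apply/ffunP => k; rewrite ffunE perm1.
apply: leq_trans (step Hr p hm) (IH (ltnW hm)).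
Qed.

Lemma mode_perm_le (r : tensor -> nat) (Hr : is_tensor_rank_fn r) X p :
  (r (@mode_perm X p) <= r X)%N.
Proof.
suff -> : mode_perm p = Pm p (size (tdims X)) by apply: le_all.
rewrite /Pm /mode_perm; congr Tensor; apply/ffunP => i; rewrite !ffunE.
by congr (tent X _); apply/ffunP => k; rewrite !ffunE ltn_ord.
Qed.

Theorem proposition4p4 (r : tensor -> nat) (Hr : is_tensor_rank_fn r)
  (X : tensor) (p : forall n : 'I_(size (tdims X)), {perm 'I_(nth 0%N (tdims X) n)}) :
  r (mode_perm p) = r X.
Proof.
apply/eqP; rewrite eqn_leq mode_perm_le //=.
have E : @mode_perm (mode_perm p) (fun k => (p k)^-1)%g = X.
  case: X p => s t p; rewrite /mode_perm /=; congr Tensor.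
  apply/ffunP => i; rewrite !ffunE; congr (t _).
  by apply/ffunP => k; rewrite !ffunE permKV.
by move: (mode_perm_le Hr (fun k : 'I_(size (tdims (mode_perm p))) => (p k)^-1)%g); rewrite E.
Qed.
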